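(* Let $\mathcal{G}^0=(\mathcal V,\mathcal E^0)$ be a graph on $\mathcal V=\{1,\dots,N\}$ (not necessarily undirected) and let the packet-loss processes $\{\theta^{ij}_k\}$, $e^{ij}\in\mathcal E^0$, satisfy Assumption A. Then for every $k\ge 0$, $$\mathbb E\big[L_{\sigma_{k+1}}^\top L_{\sigma_{k+1}}\,\big|\,\sigma_k\big]=\mathbb E\big[L_{\sigma_{k+1}}\,\big|\,\sigma_k\big]^\top\,\mathbb E\big[L_{\sigma_{k+1}}\,\big|\,\sigma_k\big]+\mathcal V_k(\mathcal G)+\mathcal V_k(\mathcal G^\top),$$ where conditional expectations of random matrices are taken entrywise and $\mathcal V_k(\mathcal G),\mathcal V_k(\mathcal G^\top)$ are the conditional variance matrices defined in the context.
   Context: Graphs: $\mathcal G=(\mathcal V,\mathcal E)$ with $\mathcal V=\{1,\dots,N\}$, $\mathcal E\subseteq\mathcal V\times\mathcal V$, no self-loops; $e^{ij}:=(i,j)$ is read as an edge pointing from $j$ to $i$. In-neighbourhood $\mathcal N_i^-=\{j:e^{ij}\in\mathcal E\}$, out-neighbourhood $\mathcal N_i^+=\{j:e^{ji}\in\mathcal E\}$. The transposed graph $\mathcal G^\top$ has edge set $\{e^{ij}:e^{ji}\in\mathcal E\}$. The Laplacian $L(\mathcal G)=[l_{ij}]\in\mathbb Z^{N\times N}$ has $l_{ij}=-1$ if $i\neq j$ and $e^{ij}\in\mathcal E$, $l_{ij}=0$ if $i\ne j$ and $e^{ij}\notin\mathcal E$, and $l_{ii}=-\sum_{l\neq i}l_{il}$.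 Packet loss: for each $e^{ij}\in\mathcal E^0$ there is a $\{0,1\}$-valued process $\{\theta^{ij}_k\}_{k\ge0}$ ($1$ = successful transmission on $e^{ij}$ at time $k$). Let $\sigma_k:=(\theta^{ij}_k)_{e^{ij}\in\mathcal E^0}$ denote the joint state, $\mathcal G_{\sigma_k}:=(\mathcal V,\{e^{ij}\in\mathcal E^0:\theta^{ij}_k=1\})$, $L_{\sigma_k}:=L(\mathcal G_{\sigma_k})$, $L^0:=L(\mathcal G^0)$. Assumption A: there are numbers $p^{ij},q^{ij},\eta^{ij}\in[0,1]$ such that $\mathbb P(\theta^{ij}_0=1)=\eta^{ij}$; $\{\sigma_k\}$ is a Markov chain and, conditionally on $\sigma_k$, $\theta^{ij}_{k+1}=1$ with probability $p^{ij}$ if $\theta^{ij}_k=1$ and with probability $q^{ij}$ if $\theta^{ij}_k=0$; and the processes associated with distinct unordered pairs of vertices (i.e. $\theta^{ij}$ and $\theta^{rs}$ whenever $e^{rs}\notin\{e^{ij},e^{ji}\}$) are mutually independent. Conditional variance matrices: set $v^{ij}_k:=\operatorname{Var}[\theta^{ij}_{k+1}\mid\sigma_k]$ for $e^{ij}\in\mathcal E^0$ ($=\alpha(1-\alpha)$ with $\alpha=\mathbb E[\theta^{ij}_{k+1}\mid\sigma_k]$). $\mathcal V_k(\mathcal G)$ is the $N\times N$ matrix with off-diagonal entries $-v^{ij}_k$ if $e^{ij}\in\mathcal E^0$ and $0$ otherwise, and diagonal entries $\sum_{r\in\mathcal N_i^-}v^{ir}_k$ (the conditional variance of the $i$-th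 diagonal entry of $L(\mathcal G_{\sigma_{k+1}})$); $\mathcal V_k(\mathcal G^\top)$ is the analogous matrix for the transposed graph, i.e. off-diagonal $(i,j)$ entry $-v^{ji}_k$ if $e^{ji}\in\mathcal E^0$, else $0$, and diagonal entries $\sum_{s\in\mathcal N_i^+}v^{si}_k$ (neighbourhoods w.r.t. $\mathcal G^0$). (These are the weighted Laplacians of $\mathcal G^0$ and $(\mathcal G^0)^\top$ with edge weights $v^{ij}_k$.) *)

(* Defs.v *)
From HB Require Import structures.
From mathcomp Require Import all_boot all_order all_algebra.
From mathcomp Require Import all_classical all_reals all_analysis.
Set Implicit Arguments. Unset Strict Implicit. Unset Printing Implicit Defensive.
Import Order.TTheory GRing.Theory Num.Theory.
Local Open Scope classical_set_scope.
Local Open Scope ring_scope.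

Section Defs.
Context {R : realType} {d : measure_display} {Omega : measurableType d}.
Context (P : probability Omega R).

(* Laplacian L(G) of a graph on 'I_N given by its edge relation E:
   E i j  <->  e^{ij} = (i,j) in the edge set (edge pointing from j to i). *)
Definition laplacian (N : nat) (E : rel 'I_N) : 'M[R]_N :=
  \matrix_(i, j) if i == j then - \sum_(l < N | l != i) (- ((E i l)%:R : R))
                 else - ((E i j)%:R : R).

(* Event {sigma_k = s}: the joint state of the edge processes on E0 at time k
   equals s (only the entries on edges of E0 are relevant). *)
Definition state_ev (N : nat) (E0 : rel 'I_N)
  (theta : 'I_N -> 'I_N -> nat -> Omega -> bool) (k : nat)
  (s : 'I_N -> 'I_N -> bool) : set Omega :=
  [set w | forall i j, E0 i j -> theta i j k w = s i j].

(* Event that the processes attached to the unordered pair {i,j}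
   (theta^{ij} if e^{ij} in E0, theta^{ji} if e^{ji} in E0) follow the
   pattern f on the times 0..n. *)
Definition pair_ev (N : nat) (E0 : rel 'I_N)
  (theta : 'I_N -> 'I_N -> nat -> Omega -> bool) (n : nat) (i j : 'I_N)
  (f : 'I_n.+1 -> bool * bool) : set Omega :=
  [set w | forall t : 'I_n.+1,
     (E0 i j -> theta i j t w = (f t).1) /\ (E0 j i -> theta j i t w = (f t).2)].

(* Conditional expectation of a real random variable X given an atom A of a
   discrete random variable (used with A = {sigma_k = s}, P A > 0). *)
Definition cexp (A : set Omega) (X : Omega -> R) : R :=
  fine (\int[P]_(w in A) (X w)%:E) / fine (P A).

Definition cvar (A : set Omega) (X : Omega -> R) : R :=
  cexp A (fun w => (X w - cexp A X) ^+ 2).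

End Defs.

(* Main.v *)
Require Import Defs.
From HB Require Import structures.
From mathcomp Require Import all_boot all_order all_algebra.
From mathcomp Require Import all_classical all_reals all_analysis.
From mathcomp Require Import ring.
Import Order.TTheory GRing.Theory Num.Theory.
Local Open Scope classical_set_scope.
Local Open Scope ring_scope.

Section Basics.
Context {R : realType} {d : measure_display} {Omega : measurableType d}.
Variable (P : probability Omega R).

Definition mu (S : set Omega) : R := fine (P S).

Lemma PE S : measurable S -> P S = (mu S)%:E.
Proof. by move=> mS; rewrite /mu fineK //; exact: fin_num_measure. Qed.

Lemma muU A B : measurable A -> measurable B -> A `&` B = set0 ->
  mu (A `|` B) = mu A + mu B.
Proof.
move=> mA mB AB; apply/EFin_inj; rewrite EFinD -!PE //; last exact: measurableU.
by rewrite measureU.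
Qed.

Lemma measure_seq (I : eqType) (s : seq I) (F : I -> set Omega) :
  uniq s -> (forall i, measurable (F i)) ->
  (forall i j, i != j -> F i `&` F j = set0) ->
  mu (\big[setU/set0]_(i <- s) F i) = \sum_(i <- s) mu (F i).
Proof.
elim: s => [|h t ih] /= us mF dF; first by rewrite !big_nil /mu measure0.
case/andP: us => ht ut.
rewrite !big_cons -ih // muU //; first exact: bigsetU_measurable.
rewrite big_distrr /= big_seq big1 // => i it; apply: dF.
by apply/eqP => hi; rewrite hi it in ht.
Qed.

Lemma mu_part (T : finType) (X : Omega -> T) S : measurable S ->
  (forall t, measurable (X @^-1` [set t])) ->
  mu S = \sum_t mu (S `&` X @^-1` [set t]).
Proof.
move=> mS mX.
rewrite {1}(_ : S = \big[setU/set0]_(t <- index_enum T) (S `&` X @^-1` [set t])).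
  rewrite measure_seq //; first exact: index_enum_uniq.
    by move=> t; exact: measurableI.
  move=> i j ij; apply/seteqP; split => // w [[_ /= ->] [_ /= e]].
  by rewrite e eqxx in ij.
rewrite -bigcup_seq; apply/seteqP; split => [w Sw | w [t _ [Sw _]] //].
by exists (X w) => //=; rewrite mem_index_enum.
Qed.

Lemma cexpE (T : finType) (X : Omega -> T) (g : T -> R) A :
  measurable A -> (forall t, measurable (X @^-1` [set t])) ->
  cexp P A (fun w => g (X w)) = (\sum_t g t * mu (A `&` X @^-1` [set t])) / mu A.
Proof.
move=> mA mX; rewrite /cexp -/(mu A); congr (_ / _).
rewrite {1}(_ : A = \big[setU/set0]_(t <- index_enum T) (A `&` X @^-1` [set t])).
  rewrite integral_bigsetU_EFin //.
  - rewrite (eq_bigr (fun t => (g t * mu (A `&` X @^-1` [set t]))%:E)) ?sumEFin //.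
    move=> t _; rewrite (@eq_integral _ _ _ _ _ (fun _ => (g t)%:E)).
      have mAt : measurable (A `&` X @^-1` [set t]) by exact: measurableI.
      by rewrite (integral_cst P mAt) /mu EFinM fineK //; exact: fin_num_measure.
    by move=> w; rewrite inE => -[_ /= ->].
  - by move=> t; exact: measurableI.
  - exact: index_enum_uniq.
  - by move=> i j _ _ [w [[_ /= <-] [_ /= <-]]].
  - move=> _ Y mY.
    rewrite (_ : _ @^-1` Y = \bigcup_(t in [set t | Y (g t)%:E]) X @^-1` [set t]).
      apply: measurableI; first by apply: bigsetU_measurable => t _; exact: measurableI.
      by apply: fin_bigcup_measurable => //; exact: finite_finset.
    by apply/seteqP; split => [w /= Yw | w [t /= Yt e]] //=; [exists (X w) | rewrite e].
rewrite -bigcup_seq; apply/seteqP; split => [w Sw | w [t _ [Sw _]] //].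
by exists (X w) => //=; rewrite mem_index_enum.
Qed.

End Basics.


Section Indep.
Context {R : realType} {d : measure_display} {Omega : measurableType d}.
Variable (P : probability Omega R).

Lemma meas_forall (I : finType) (S : I -> set Omega) :
  (forall u, measurable (S u)) -> measurable [set w | forall u, S u w].
Proof.
move=> mS; rewrite (_ : [set w | forall u, S u w] = \big[setI/setT]_(u <- index_enum I) S u).
  exact: bigsetI_measurable.
rewrite -bigcap_seq; apply/seteqP; split => [w /= H u _ | w /= H u] //.
by apply: H; rewrite /= mem_index_enum.
Qed.

Lemma meas_pred (T : finType) (X : Omega -> T) (Q : pred T) :
  (forall t, measurable (X @^-1` [set t])) -> measurable [set w | Q (X w)].
Proof.
move=> mX; rewrite (_ : [set w | Q (X w)] = \bigcup_(t in [set t | Q t]) X @^-1` [set t]).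
  by apply: fin_bigcup_measurable => //; exact: finite_finset.
by apply/seteqP; split => [w /= Yw | w [t /= Yt e]] //=; [exists (X w) | rewrite e].
Qed.

Lemma mu_set0 : mu P set0 = 0.
Proof. by rewrite /mu measure0. Qed.

Lemma indep_gen (I T : finType) (X : I -> Omega -> T) :
  (forall u t, measurable (X u @^-1` [set t])) ->
  (forall F : {ffun I -> T}, mu P [set w | forall u, X u w = F u]
       = \prod_u mu P (X u @^-1` [set F u])) ->
  forall Q : I -> pred T,
  mu P [set w | forall u, Q u (X u w)] = \prod_u mu P [set w | Q u (X u w)].
Proof.
move=> mX hF Q.
have mXall : forall F : {ffun I -> T},
    measurable ((fun w => [ffun u => X u w]) @^-1` [set F]).
  move=> F; rewrite (_ : _ @^-1` _ = [set w | forall u, X u w = F u]).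
    by apply: meas_forall => u; exact: mX.
  apply/seteqP; split => w /=.
    by move=> <- u; rewrite ffunE.
  by move=> H; apply/ffunP => u; rewrite ffunE H.
have mQ : forall u, measurable [set w | Q u (X u w)].
  by move=> u; apply: meas_pred; exact: mX.
rewrite (@mu_part _ _ _ P _ (fun w => [ffun u => X u w])) //; last first.
  by apply: meas_forall => u; exact: mQ.
under eq_bigr => u _ do rewrite (@mu_part _ _ _ P _ (X u)) //.
rewrite bigA_distr_bigA; apply: eq_bigr => F _.
have e1 : forall u t, [set w | Q u (X u w)] `&` X u @^-1` [set t]
    = if Q u t then X u @^-1` [set t] else set0.
  move=> u t; case: ifPn => Qt; apply/seteqP; split => w //=.
  - by case.
  - by move=> e; split => //; rewrite e.
  - by case => Qw e; rewrite -e Qw in Qt.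
under eq_bigr => u _ do rewrite e1 (fun_if (mu P)) mu_set0.
case: (boolP [forall u, Q u (F u)]) => /forallP HQ.
  rewrite (_ : _ `&` _ = [set w | forall u, X u w = F u]).
    by rewrite hF; apply: eq_bigr => u _; rewrite HQ.
  apply/seteqP; split => w /=.
    by move=> [_ <-] u; rewrite ffunE.
  move=> H; split; last by apply/ffunP => u; rewrite ffunE H.
  by move=> u; rewrite H HQ.
have [u nQ] : exists u, ~~ Q u (F u).
  apply/existsP; rewrite -negb_forall; apply/negP => /forallP; exact: HQ.
rewrite (bigD1 u) //= (negbTE nQ) mul0r.
rewrite (_ : _ `&` _ = set0) ?mu_set0 //.
apply/seteqP; split => w //= [H e]; move: (H u).
by rewrite (_ : X u w = F u) ?(negbTE nQ) // -e ffunE.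
Qed.

End Indep.


Section Pairs.
Context {R : realType} {d : measure_display} {Omega : measurableType d}.
Variable (P : probability Omega R).
Variables (N : nat) (E0 : rel 'I_N) (theta : 'I_N -> 'I_N -> nat -> Omega -> bool).
Hypothesis hmeas : forall i j k, measurable [set w | theta i j k w].
Variable n : nat.
Hypothesis hindep : forall F : 'I_N -> 'I_N -> 'I_n.+1 -> bool * bool,
     P [set w | forall i j : 'I_N, (i < j)%N -> pair_ev E0 theta i j (F i j) w]
     = (\prod_(ij : 'I_N * 'I_N | (ij.1 < ij.2)%N)
          P (pair_ev E0 theta ij.1 ij.2 (F ij.1 ij.2)))%E.

Definition pat (u : 'I_N * 'I_N) (w : Omega) : {ffun 'I_n.+1 -> bool * bool} :=
  if (u.1 < u.2)%N then
    [ffun t : 'I_n.+1 => (E0 u.1 u.2 && theta u.1 u.2 t w, E0 u.2 u.1 && theta u.2 u.1 t w)]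
  else [ffun => (false, false)].

Lemma meas_eqb (th : Omega -> bool) c :
  measurable [set w | th w] -> measurable [set w | th w = c].
Proof.
move=> m; case: c => //.
rewrite (_ : [set w | th w = false] = ~` [set w | th w]); first exact: measurableC.
by apply/seteqP; split => w /=; [move=> -> | move/negP/negbTE].
Qed.

Lemma meas_andb (b : bool) (th : Omega -> bool) c :
  measurable [set w | th w] -> measurable [set w | (b && th w) = c].
Proof.
move=> m; case: b => /=; first exact: meas_eqb.
case: c.
  by rewrite (_ : [set w | false = true] = set0) //; apply/seteqP; split => w.
by rewrite (_ : [set w | false = false] = setT) //; apply/seteqP; split => w.
Qed.

Lemma meas_ext (A B : set Omega) : measurable A -> B = A -> measurable B.
Proof. by move=> mA ->. Qed.

Lemma meas_pat u f : measurable (pat u @^-1` [set f]).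
Proof.
rewrite (_ : pat u @^-1` [set f] = [set w | forall t,
   ([set w | (pat u w t).1 = (f t).1] `&` [set w | (pat u w t).2 = (f t).2]) w]).
  apply: meas_forall => t.
  apply: measurableI; rewrite /pat; case: (u.1 < u.2)%N => /=.
  - apply: (@meas_ext [set w | (E0 u.1 u.2 && theta u.1 u.2 t w) = (f t).1]); first exact: meas_andb.
    by apply/seteqP; split => w; rewrite /= ffunE.
  - apply: (@meas_ext [set w | (false && theta u.2 u.1 t w) = (f t).1]); first exact: meas_andb.
    by apply/seteqP; split => w; rewrite /= ffunE.
  - apply: (@meas_ext [set w | (E0 u.2 u.1 && theta u.2 u.1 t w) = (f t).2]); first exact: meas_andb.
    by apply/seteqP; split => w; rewrite /= ffunE.
  - apply: (@meas_ext [set w | (false && theta u.2 u.1 t w) = (f t).2]); first exact: meas_andb.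
    by apply/seteqP; split => w; rewrite /= ffunE.
apply/seteqP; split => w /=.
  by move=> -> t.
move=> H; apply/ffunP => t; case: (H t).
by case: (pat u w t) (f t) => ? ? [? ?] /= -> ->.
Qed.

Definition valid (u : 'I_N * 'I_N) (f : {ffun 'I_n.+1 -> bool * bool}) : bool :=
  if (u.1 < u.2)%N then
    [forall t, (~~ E0 u.1 u.2 ==> ~~ (f t).1) && (~~ E0 u.2 u.1 ==> ~~ (f t).2)]
  else f == [ffun => (false, false)].

Lemma pat_valid (u : 'I_N * 'I_N) w : valid u (pat u w).
Proof.
rewrite /valid /pat; case: (u.1 < u.2)%N => //.
by apply/forallP => t; rewrite ffunE /=; case: (E0 u.1 u.2); case: (E0 u.2 u.1).
Qed.

Lemma pat_pair (u : 'I_N * 'I_N) (f : {ffun 'I_n.+1 -> bool * bool}) w : (u.1 < u.2)%N -> valid u f ->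
  (pat u w = f <-> pair_ev E0 theta u.1 u.2 f w).
Proof.
rewrite /valid /pat => -> /forallP V; split.
  by move=> <- t; rewrite ffunE /=; split => h; rewrite h.
move=> H; apply/ffunP => t; rewrite ffunE; case: (H t) => h1 h2.
move: (V t); case: (f t) h1 h2 => a b /= h1 h2 /andP [v1 v2].
congr (_, _).
  by case: (E0 u.1 u.2) h1 v1 => /= [h1 _ | _ v1]; [rewrite h1 | rewrite (negbTE v1)].
by case: (E0 u.2 u.1) h2 v2 => /= [h2 _ | _ v2]; [rewrite h2 | rewrite (negbTE v2)].
Qed.

Lemma hyp_indep (F : {ffun 'I_N * 'I_N -> {ffun 'I_n.+1 -> bool * bool}}) :
  mu P [set w | forall u, pat u w = F u] = \prod_u mu P (pat u @^-1` [set F u]).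
Proof.
case: (boolP [forall u, valid u (F u)]) => [/forallP V | ].
  rewrite (bigID (fun u : 'I_N * 'I_N => (u.1 < u.2)%N)) /=.
  rewrite [X in _ * X]big1 ?mulr1; last first.
    move=> u /negbTE nu.
    rewrite (_ : _ @^-1` _ = setT) /mu ?probability_setT //.
    apply/seteqP; split => w //= _.
    by move: (V u); rewrite /valid /pat nu => /eqP ->.
  have mS : measurable [set w | forall u, pat u w = F u].
    by apply: meas_forall => u; exact: meas_pat.
  apply: EFin_inj; rewrite -prodEFin -PE //.
  rewrite (_ : [set w | forall u, pat u w = F u] = [set w | forall i j : 'I_N,
      (i < j)%N -> pair_ev E0 theta i j (F (i, j)) w]); last first.
    apply/seteqP; split => w /=.
      by move=> H i j hij; apply/(pat_pair (i, j)) => //; exact: V.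
    move=> H [i j]; case: (ltnP i j) => hij.
      by apply/(pat_pair (i, j)) => //; exact: H.
    move: (V (i, j)); rewrite /valid /pat /= ltnNge hij /= => /eqP ->.
    by [].
  rewrite (hindep (fun i j => F (i, j))); apply: eq_bigr => -[i j] /= hij.
  rewrite -PE; last exact: meas_pat.
  congr (P _).
  by apply/seteqP; split => w /= h; [apply/(pat_pair (i, j)) | apply/(pat_pair (i, j))] => //; exact: V.
rewrite negb_forall => /existsP [u nV].
rewrite (bigD1 u) //=.
rewrite (_ : pat u @^-1` [set F u] = set0) ?mu_set0 ?mul0r.
  rewrite (_ : [set w | _] = set0) ?mu_set0 //.
  apply/seteqP; split => w //= H.
  by move: (pat_valid u w); rewrite H (negbTE nV).
apply/seteqP; split => w //= H.
by move: (pat_valid u w); rewrite H (negbTE nV).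
Qed.

Lemma pair_indep (Q : 'I_N * 'I_N -> pred {ffun 'I_n.+1 -> bool * bool}) :
  mu P [set w | forall u, Q u (pat u w)] = \prod_u mu P [set w | Q u (pat u w)].
Proof.
apply: indep_gen => //; first by move=> u t; exact: meas_pat.
exact: hyp_indep.
Qed.

End Pairs.


Lemma four {R : comRingType} (I : finType) (ue uf : I) (h : bool -> bool -> I -> R) :
  ue != uf ->
  (forall ce cf u, u != ue -> u != uf -> h ce cf u = h false false u) ->
  (forall ce cf, h ce cf ue = h ce false ue) ->
  (forall ce cf, h ce cf uf = h false cf uf) ->
  (\prod_u h true true u) * (\prod_u h false false u)
  = (\prod_u h true false u) * (\prod_u h false true u).
Proof.
move=> neq H0 He Hf.
have E ce cf : \prod_u h ce cf u = h ce false ue * h false cf uf *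
    \prod_(u | (u != ue) && (u != uf)) h false false u.
  rewrite (bigD1 ue) //= (bigD1 uf) /=; last by rewrite eq_sym neq.
  rewrite He Hf mulrA; congr (_ * _); apply: eq_bigr => u /andP [a b].
  exact: H0.
rewrite !E; ring.
Qed.

Section Main.
Context {R : realType} {d : measure_display} {Omega : measurableType d}.
Variable (P : probability Omega R).
Variables (N : nat) (E0 : rel 'I_N) (theta : 'I_N -> 'I_N -> nat -> Omega -> bool).
Hypothesis hirr : irreflexive E0.
Hypothesis hmeas : forall i j k, measurable [set w | theta i j k w].
Hypothesis hindep : forall (n : nat) (F : 'I_N -> 'I_N -> 'I_n.+1 -> bool * bool),
     P [set w | forall i j : 'I_N, (i < j)%N -> pair_ev E0 theta i j (F i j) w]
     = (\prod_(ij : 'I_N * 'I_N | (ij.1 < ij.2)%N)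
          P (pair_ev E0 theta ij.1 ij.2 (F ij.1 ij.2)))%E.

Definition key (i j : 'I_N) : 'I_N * 'I_N := if (i < j)%N then (i, j) else (j, i).
Definition sel (i j : 'I_N) (x : bool * bool) : bool := if (i < j)%N then x.1 else x.2.

Lemma pat_sel n (i j : 'I_N) w t : i != j ->
  sel i j (pat N E0 theta n (key i j) w t) = E0 i j && theta i j t w.
Proof.
move=> ij; rewrite /sel /key /pat; case: ltngtP => h /=.
- by rewrite h ffunE.
- by rewrite h ffunE.
- by move: ij; rewrite (val_inj h) eqxx.
Qed.

Lemma key_neq (c q r : 'I_N) : c != q -> c != r -> q != r -> key c q != key c r.
Proof.
move=> cq cr qr; rewrite /key.
case: ifP => _; case: ifP => _; rewrite xpair_eqE ?eqxx /= ?andbT //.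
- by rewrite (negbTE cr).
- by rewrite eq_sym (negbTE cq).
Qed.

Lemma indep_state k (s : 'I_N -> 'I_N -> bool) (c q r : 'I_N) :
  E0 c q -> E0 c r -> q != r ->
  let S ce cf := state_ev E0 theta k s `&`
     [set w | (ce ==> theta c q k.+1 w) && (cf ==> theta c r k.+1 w)] in
  mu P (S true true) * mu P (S false false) = mu P (S true false) * mu P (S false true).
Proof.
move=> Ecq Ecr qr S.
have cq : c != q by apply/eqP => e; move: Ecq; rewrite e hirr.
have cr : c != r by apply/eqP => e; move: Ecr; rewrite e hirr.
pose tk : 'I_k.+2 := inord k.
pose tk1 : 'I_k.+2 := inord k.+1.
have vk : (tk : nat) = k by rewrite inordK.
have vk1 : (tk1 : nat) = k.+1 by rewrite inordK.
pose QA (u : 'I_N * 'I_N) (f : {ffun 'I_k.+2 -> bool * bool}) :=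
  [forall i, forall j, ((key i j == u) && E0 i j) ==> (sel i j (f tk) == s i j)].
pose cnd i j (u : 'I_N * 'I_N) (f : {ffun 'I_k.+2 -> bool * bool}) :=
  (u == key i j) ==> sel i j (f tk1).
pose Qc ce cf u f := QA u f && (ce ==> cnd c q u f) && (cf ==> cnd c r u f).
have ES : forall ce cf,
    S ce cf = [set w | forall u, Qc ce cf u (pat N E0 theta k.+1 u w)].
  move=> ce cf; apply/seteqP; split => w /=.
  - move=> [Aw /andP [h1 h2]] u; apply/andP; split; [apply/andP; split|].
    + apply/forallP => i; apply/forallP => j; apply/implyP => /andP [/eqP <- Eij].
      have ij : i != j by apply/eqP => e; move: Eij; rewrite e hirr.
      by rewrite pat_sel // Eij /= vk (Aw i j Eij).
    + apply/implyP => hce; apply/implyP => /eqP ->.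
      by rewrite pat_sel // Ecq /= vk1 (implyP h1 hce).
    + apply/implyP => hcf; apply/implyP => /eqP ->.
      by rewrite pat_sel // Ecr /= vk1 (implyP h2 hcf).
  - move=> H; split; [|apply/andP; split].
    + move=> i j Eij.
      have ij : i != j by apply/eqP => e; move: Eij; rewrite e hirr.
      move: (H (key i j)) => /andP [/andP [/forallP /(_ i) /forallP /(_ j) + _] _].
      by rewrite eqxx Eij /= pat_sel // Eij /= vk => /eqP.
    + apply/implyP => hce; move: (H (key c q)) => /andP [/andP [_ h] _].
      move: (implyP h hce).
      by rewrite /cnd eqxx /= pat_sel // Ecq /= vk1.
    + apply/implyP => hcf; move: (H (key c r)) => /andP [_ h].
      move: (implyP h hcf).
      by rewrite /cnd eqxx /= pat_sel // Ecr /= vk1.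
have EM : forall ce cf, mu P (S ce cf)
    = \prod_u mu P [set w | Qc ce cf u (pat N E0 theta k.+1 u w)].
  by move=> ce cf; rewrite ES; exact: (@pair_indep _ _ _ P N E0 theta hmeas k.+1 (hindep k.+1) (Qc ce cf)).
rewrite !EM.
apply: (@four _ _ (key c q) (key c r)
   (fun ce cf u => mu P [set w | Qc ce cf u (pat N E0 theta k.+1 u w)])).
- exact: key_neq.
- move=> ce cf u n1 n2.
  have -> // : Qc ce cf u = Qc false false u.
  by apply: funext => f; rewrite /Qc /cnd (negbTE n1) (negbTE n2) /= !implybT !andbT.
- move=> ce cf.
  have -> // : Qc ce cf (key c q) = Qc ce false (key c q).
  apply: funext => f; rewrite /Qc /cnd.
  by rewrite (negbTE (@key_neq c q r cq cr qr)) /= !implybT !andbT.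
- move=> ce cf.
  have -> // : Qc ce cf (key c r) = Qc false cf (key c r).
  apply: funext => f; rewrite /Qc /cnd.
  by rewrite eq_sym (negbTE (@key_neq c q r cq cr qr)) /= !implybT !andbT.
Qed.

End Main.


Section Alg.
Variables (R : comRingType) (N : nat).

Lemma delta_l (a : 'I_N) (F : 'I_N -> R) : \sum_i (i == a)%:R * F i = F a.
Proof.
rewrite (bigD1 a) //= eqxx mul1r big1 ?addr0 // => i ia.
by rewrite (negbTE ia) mul0r.
Qed.

Definition beta (c dd q : 'I_N) : R := (c == dd)%:R - (q == dd)%:R.

Lemma cov_sum (V : 'I_N -> 'I_N -> R) a b :
  \sum_c \sum_q beta c a q * beta c b q * V c q
  = (a == b)%:R * (\sum_q V a q + \sum_c V c a) - V a b - V b a.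
Proof.
have E : forall x y z u w : R,
    (x - y) * (z - u) * w = x * z * w - x * u * w - y * z * w + y * u * w.
  by move=> *; ring.
have per : forall c, \sum_q beta c a q * beta c b q * V c q
    = (c == a)%:R * ((c == b)%:R * \sum_q V c q) - (c == a)%:R * V c b
      - (c == b)%:R * V c a + (a == b)%:R * V c a.
  move=> c; rewrite /beta.
  under eq_bigr => q _ do rewrite E.
  rewrite !big_split /= !sumrN.
  have t1 : \sum_q (c == a)%:R * (c == b)%:R * V c q
      = (c == a)%:R * ((c == b)%:R * \sum_q V c q).
    by rewrite !mulr_sumr; apply: eq_bigr => q _; rewrite mulrA.
  have t2 : \sum_q (c == a)%:R * (q == b)%:R * V c q = (c == a)%:R * V c b.
    transitivity (\sum_q (c == a)%:R * ((q == b)%:R * V c q)).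
      by apply: eq_bigr => i _; ring.
    by rewrite -mulr_sumr delta_l.
  have t3 : \sum_q (q == a)%:R * (c == b)%:R * V c q = (c == b)%:R * V c a.
    transitivity (\sum_q (c == b)%:R * ((q == a)%:R * V c q)).
      by apply: eq_bigr => i _; ring.
    by rewrite -mulr_sumr delta_l.
  have t4 : \sum_q (q == a)%:R * (q == b)%:R * V c q = (a == b)%:R * V c a.
    rewrite (bigD1 a) //= eqxx big1 ?addr0.
      by rewrite mul1r eq_sym; case: (b == a); rewrite ?mulr1 ?mulr0 ?mul0r ?mul1r.
    by move=> q qa; rewrite (negbTE qa) !mul0r.
  by rewrite t1 t2 t3 t4.
under eq_bigr => c _ do rewrite per.
rewrite !big_split /= !sumrN.
rewrite delta_l delta_l.
rewrite (_ : \sum_i (i == b)%:R * V i a = V b a) ?delta_l //.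
rewrite -mulr_sumr.
rewrite eq_sym; case: (b == a); rewrite ?mul1r ?mul0r; ring.
Qed.

Lemma main_alg (m V : 'I_N -> 'I_N -> R) (EQ : 'I_N -> 'I_N -> 'I_N -> R) a b :
  (forall c q r, EQ c q r = m c q * m c r + (q == r)%:R * V c q) ->
  \sum_c \sum_q \sum_r beta c a q * beta c b r * EQ c q r
  = \sum_c (\sum_q beta c a q * m c q) * (\sum_r beta c b r * m c r)
    + ((a == b)%:R * (\sum_q V a q + \sum_c V c a) - V a b - V b a).
Proof.
move=> hEQ; rewrite -cov_sum -big_split /=; apply: eq_bigr => c _.
rewrite mulr_suml -big_split /=; apply: eq_bigr => q _.
rewrite mulr_sumr.
rewrite (bigD1 q) //= [in RHS](bigD1 q) //=.
have -> : \sum_(r < N | r != q) beta c a q * beta c b r * EQ c q r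
   = \sum_(r < N | r != q) beta c a q * m c q * (beta c b r * m c r).
  by apply: eq_bigr => r rq; rewrite hEQ eq_sym (negbTE rq) mul0r addr0; ring.
rewrite hEQ eqxx mul1r; set S := \sum_(r < N | _) _; ring.
Qed.

End Alg.


Lemma lapE {R : realType} (N : nat) (E : rel 'I_N) (c dd : 'I_N) : E c c = false ->
  @laplacian R N E c dd = \sum_q (beta R N c dd q * (E c q)%:R).
Proof.
move=> Ecc; rewrite mxE /beta; case: eqVneq => [<-|cd].
  rewrite sumrN opprK [RHS](bigD1 c) //= eqxx subrr mul0r add0r.
  by apply: eq_bigr => q qc; rewrite (negbTE qc) subr0 mul1r.
rewrite (bigD1 dd) //= eqxx big1 ?addr0; first by rewrite sub0r mulN1r.
by move=> q qd; rewrite (negbTE qd) subrr mul0r.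
Qed.

Theorem lemma1 (R : realType) (d : measure_display) (Omega : measurableType d)
  (P : probability Omega R) (N : nat) (E0 : rel 'I_N)
  (theta : 'I_N -> 'I_N -> nat -> Omega -> bool)
  (p q eta : 'I_N -> 'I_N -> R)
  (* no self-loops *)
  (hirr : irreflexive E0)
  (* the theta's are random variables *)
  (hmeas : forall i j k, measurable [set w | theta i j k w])
  (* Assumption A *)
  (hpqe : forall i j, E0 i j ->
     [/\ 0 <= p i j <= 1, 0 <= q i j <= 1 & 0 <= eta i j <= 1])
  (hinit : forall i j, E0 i j -> P [set w | theta i j 0%N w] = (eta i j)%:E)
  (hmarkov : forall (k : nat) (h : nat -> 'I_N -> 'I_N -> bool)
       (s' : 'I_N -> 'I_N -> bool),
     let H := [set w | forall t, (t <= k)%N -> state_ev E0 theta t (h t) w] in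
     (P (H `&` state_ev E0 theta k.+1 s') * P (state_ev E0 theta k (h k)))%E
     = (P H * P (state_ev E0 theta k (h k) `&` state_ev E0 theta k.+1 s'))%E)
  (htrans : forall (k : nat) (s : 'I_N -> 'I_N -> bool) (i j : 'I_N), E0 i j ->
     P (state_ev E0 theta k s `&` [set w | theta i j k.+1 w])
     = ((if s i j then p i j else q i j)%:E * P (state_ev E0 theta k s))%E)
  (hindep : forall (n : nat) (F : 'I_N -> 'I_N -> 'I_n.+1 -> bool * bool),
     P [set w | forall i j : 'I_N, (i < j)%N -> pair_ev E0 theta i j (F i j) w]
     = (\prod_(ij : 'I_N * 'I_N | (ij.1 < ij.2)%N)
          P (pair_ev E0 theta ij.1 ij.2 (F ij.1 ij.2)))%E) :
  forall (k : nat) (s : 'I_N -> 'I_N -> bool),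
  (0 < P (state_ev E0 theta k s))%E ->
  let A := state_ev E0 theta k s in
  let L := fun w => laplacian (fun i j => E0 i j && theta i j k.+1 w) in
  let EL : 'M[R]_N := \matrix_(a, b) cexp P A (fun w => L w a b) in
  let v := fun i j => cvar P A (fun w => (theta i j k.+1 w)%:R) in
  let VG : 'M[R]_N := \matrix_(i, j)
      if i == j then \sum_(r < N | E0 i r) v i r
      else if E0 i j then - v i j else 0 in
  let VGT : 'M[R]_N := \matrix_(i, j)
      if i == j then \sum_(r < N | E0 r i) v r i
      else if E0 j i then - v j i else 0 in
  \matrix_(a, b) cexp P A (fun w => ((L w)^T *m L w) a b)
  = EL^T *m EL + VG + VGT.
Proof.
move=> k s hA A L EL v VG VGT.
have mA : measurable A.
  rewrite /A /state_ev (_ : [set w | _] = [set w | forall u : 'I_N * 'I_N,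
     [set w | E0 u.1 u.2 -> theta u.1 u.2 k w = s u.1 u.2] w]).
    apply: meas_forall => u; case: (boolP (E0 u.1 u.2)) => Eu.
      apply: (@meas_ext _ _ [set w | theta u.1 u.2 k w = s u.1 u.2]).
        exact: meas_eqb.
      by apply/seteqP; split => w /=; [apply | move=> h _].
    apply: (@meas_ext _ _ setT) => //.
    by apply/seteqP; split => w //= _ h; rewrite h in Eu.
  apply/seteqP; split => w /= h.
    by move=> u; apply: h.
  by move=> i j; apply: (h (i, j)).
pose Y w : {ffun 'I_N * 'I_N -> bool} := [ffun ij => theta ij.1 ij.2 k.+1 w].
have mY : forall bb, measurable (Y @^-1` [set bb]).
  move=> bb; rewrite (_ : _ @^-1` _ = [set w | forall u : 'I_N * 'I_N,
     [set w | theta u.1 u.2 k.+1 w = bb u] w]).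
    by apply: meas_forall => u; exact: meas_eqb.
  apply/seteqP; split => w /=.
    by move=> <- u; rewrite ffunE.
  by move=> h; apply/ffunP => u; rewrite ffunE h.
have mApos : 0 < mu P A by rewrite -lte_fin -PE.
have mA0 : mu P A != 0 by rewrite gt_eqF.
pose M bb := mu P (A `&` Y @^-1` [set bb]).
pose Ef (g : {ffun 'I_N * 'I_N -> bool} -> R) := (\sum_bb g bb * M bb) / mu P A.
have cexpY : forall g, cexp P A (fun w => g (Y w)) = Ef g.
  by move=> g; rewrite (cexpE P _ Y g A mA mY).
have Ef_ext : forall g h, (forall bb, g bb = h bb) -> Ef g = Ef h.
  by move=> g h e; rewrite /Ef; congr (_ / _); apply: eq_bigr => bb _; rewrite e.
have EfD : forall g h, Ef (fun bb => g bb + h bb) = Ef g + Ef h.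
  move=> g h; rewrite /Ef -mulrDl -big_split /=; congr (_ / _).
  by apply: eq_bigr => bb _; rewrite mulrDl.
have EfZ : forall a g, Ef (fun bb => a * g bb) = a * Ef g.
  move=> a g; rewrite /Ef mulrA mulr_sumr; congr (_ / _).
  by apply: eq_bigr => bb _; rewrite mulrA.
have EfS : forall (F : 'I_N -> {ffun 'I_N * 'I_N -> bool} -> R),
    Ef (fun bb => \sum_i F i bb) = \sum_i Ef (F i).
  move=> F; rewrite /Ef -mulr_suml exchange_big /=; congr (_ / _).
  by apply: eq_bigr => bb _; rewrite mulr_suml.
have Ef_ind : forall Rb : pred {ffun 'I_N * 'I_N -> bool},
    Ef (fun bb => (Rb bb)%:R) = mu P (A `&` [set w | Rb (Y w)]) / mu P A.
  move=> Rb; rewrite /Ef; congr (_ / _).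
  rewrite (mu_part P _ Y); last exact: mY.
    apply: eq_bigr => bb _; case: (boolP (Rb bb)) => h.
      rewrite mul1r /M; congr (mu P _); apply/seteqP; split => w /=.
        by move=> [Aw e]; split; [split => //; rewrite e | exact: e].
      by move=> [[Aw _] e].
    rewrite mul0r (_ : _ `&` _ = set0) ?mu_set0 //.
    apply/seteqP; split => w // [[_ Rw] e]; move: Rw; rewrite /= e => Rw.
    by rewrite Rw in h.
  by apply: measurableI => //; exact: meas_pred.
have Ef1 : Ef (fun => 1) = 1.
  rewrite (Ef_ext _ (fun bb => (predT bb)%:R)) // Ef_ind.
  rewrite (_ : A `&` _ = A) ?divff //.
  by apply/seteqP; split => w /=; [case | ].
pose x (c i : 'I_N) (bb : {ffun 'I_N * 'I_N -> bool}) : R := (E0 c i && bb (c, i))%:R.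
pose m c i := Ef (x c i).
pose EQ c i j := Ef (fun bb => x c i bb * x c j bb).
pose V c i := (E0 c i)%:R * v c i.
have Ef0 : Ef (fun => 0) = 0.
  by rewrite (Ef_ext (fun => 0) (fun bb => 0 * 1)) ?EfZ ?mul0r // => bb; rewrite mul0r.
have m0 : forall c i, ~~ E0 c i -> m c i = 0.
  move=> c i h; rewrite /m (Ef_ext _ (fun => 0)) ?Ef0 // => bb.
  by rewrite /x (negbTE h).
have mcexp : forall c i, E0 c i -> m c i = cexp P A (fun w => (theta c i k.+1 w)%:R).
  move=> c i h.
  have -> : (fun w => (theta c i k.+1 w)%:R) =
            (fun w => (fun bb : {ffun 'I_N * 'I_N -> bool} => (bb (c, i))%:R : R) (Y w)).
    by apply: funext => w; rewrite /= ffunE.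
  by rewrite (cexpY (fun bb => (bb (c, i))%:R)); apply: Ef_ext => bb; rewrite /x h.
have hv : forall c i, E0 c i -> v c i = m c i - m c i ^+ 2.
  move=> c i h; rewrite /v /cvar /= -mcexp //.
  have -> : (fun w => ((theta c i k.+1 w)%:R - m c i) ^+ 2) =
     (fun w => (fun bb : {ffun 'I_N * 'I_N -> bool} =>
         (bb (c, i))%:R * (1 - 2 * m c i) + m c i ^+ 2 : R) (Y w)).
    by apply: funext => w; rewrite /= ffunE; case: (theta c i k.+1 w) => /=; ring.
  rewrite (cexpY (fun bb => (bb (c, i))%:R * (1 - 2 * m c i) + m c i ^+ 2)) EfD.
  rewrite (Ef_ext _ (fun bb => (1 - 2 * m c i) * x c i bb)); last first.
    by move=> bb; rewrite /x h mulrC.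
  rewrite EfZ (Ef_ext (fun => m c i ^+ 2) (fun => m c i ^+ 2 * 1)); last first.
    by move=> ?; rewrite mulr1.
  rewrite EfZ Ef1 -/(m c i); ring.
have hEQ : forall c i j, EQ c i j = m c i * m c j + (i == j)%:R * V c i.
  move=> c i j; case: (eqVneq i j) => [<-|ij].
    rewrite mul1r /EQ (Ef_ext _ (x c i)); last first.
      by move=> bb; rewrite /x -natrM mulnb andbb.
    rewrite -/(m c i) /V; case: (boolP (E0 c i)) => h.
      by rewrite hv // mul1r; ring.
    by rewrite m0 // !mul0r addr0.
  rewrite mul0r addr0.
  case: (boolP (E0 c i)) => hi; last first.
    rewrite m0 // mul0r /EQ (Ef_ext _ (fun => 0)) ?Ef0 // => bb.
    by rewrite /x (negbTE hi) mul0r.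
  case: (boolP (E0 c j)) => hj; last first.
    rewrite (m0 c j) // mulr0 /EQ (Ef_ext _ (fun => 0)) ?Ef0 // => bb.
    by rewrite /x (negbTE hj) mulr0.
  have ES : forall ce cf, Ef (fun bb => ((ce ==> bb (c, i)) && (cf ==> bb (c, j)))%:R)
      = mu P (A `&` [set w | (ce ==> theta c i k.+1 w) && (cf ==> theta c j k.+1 w)])
        / mu P A.
    move=> ce cf; rewrite Ef_ind; congr (mu P _ / _).
    by apply/seteqP; split => w /=; rewrite !ffunE.
  rewrite /EQ (Ef_ext _ (fun bb => ((true ==> bb (c, i)) && (true ==> bb (c, j)))%:R));
    last by move=> bb; rewrite /x hi hj -natrM mulnb.
  rewrite /m (Ef_ext (x c i) (fun bb => ((true ==> bb (c, i)) && (false ==> bb (c, j)))%:R));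
    last by move=> bb; rewrite /x hi /= andbT.
  rewrite (Ef_ext (x c j) (fun bb => ((false ==> bb (c, i)) && (true ==> bb (c, j)))%:R));
    last by move=> bb; rewrite /x hj.
  rewrite !ES.
  have := indep_state P N E0 theta hirr hmeas hindep k s c i j hi hj ij.
  rewrite /= -/A.
  have -> : mu P (A `&` [set w | (false ==> theta c i k.+1 w) && (false ==> theta c j k.+1 w)])
      = mu P A.
    by congr (mu P _); apply/seteqP; split => w /=; [case | ].
  move=> H.
  set a1 := mu P (A `&` _) in H *.
  rewrite -[a1](mulfK mA0) H; field; exact: mA0.
pose Lb (bb : {ffun 'I_N * 'I_N -> bool}) :=
  @laplacian R N (fun i j => E0 i j && bb (i, j)).
have LE : forall w, L w = Lb (Y w).
  move=> w; rewrite /L /Lb; congr laplacian.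
  by apply: funext => i; apply: funext => j; rewrite ffunE.
have LbE : forall bb c dd, Lb bb c dd = \sum_i beta R N c dd i * x c i bb.
  by move=> bb c dd; rewrite /Lb lapE // hirr.
have cexpL : forall c dd, cexp P A (fun w => L w c dd) = \sum_i beta R N c dd i * m c i.
  move=> c dd.
  have -> : (fun w => L w c dd) = (fun w => (fun bb => Lb bb c dd) (Y w)).
    by apply: funext => w; rewrite LE.
  rewrite (cexpY (fun bb => Lb bb c dd)).
  rewrite (Ef_ext _ (fun bb => \sum_i beta R N c dd i * x c i bb)) ?EfS; last by move=> bb /=; rewrite LbE.
  by apply: eq_bigr => i _; rewrite EfZ.
apply/matrixP => a b; rewrite !mxE.
have -> : (fun w => ((L w)^T *m L w) a b) =
    (fun w => (fun bb => \sum_c Lb bb c a * Lb bb c b) (Y w)).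
  apply: funext => w; rewrite (LE w) /= mxE; apply: eq_bigr => c _.
  by rewrite mxE.
rewrite (cexpY (fun bb => \sum_c Lb bb c a * Lb bb c b)).
rewrite (Ef_ext _ (fun bb => \sum_c \sum_i \sum_j
    beta R N c a i * beta R N c b j * (x c i bb * x c j bb))); last first.
  move=> bb; apply: eq_bigr => c _; rewrite !LbE mulr_suml.
  apply: eq_bigr => i _; rewrite mulr_sumr; apply: eq_bigr => j _; ring.
rewrite EfS.
under eq_bigr => c _ do rewrite EfS; under eq_bigr => c _ do
  under eq_bigr => i _ do rewrite EfS.
under eq_bigr => c _ do under eq_bigr => i _ do under eq_bigr => j _ do rewrite EfZ.
rewrite (main_alg R N m V EQ a b hEQ).
have -> : \sum_j EL^T a j * EL j b
    = \sum_c (\sum_i beta R N c a i * m c i) * (\sum_i beta R N c b i * m c i).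
  by apply: eq_bigr => c _; rewrite /EL !mxE !cexpL.
rewrite -!addrA; congr (_ + _).
have Vd : forall c, V c c = 0 by move=> c; rewrite /V hirr mul0r.
case: (eqVneq a b) => [<-|ab].
  rewrite mul1r Vd subr0 subr0; congr (_ + _).
    rewrite [RHS]big_mkcond; apply: eq_bigr => r _; rewrite /V.
    by case: (E0 a r); rewrite ?mul1r ?mul0r.
  rewrite [RHS]big_mkcond; apply: eq_bigr => r _; rewrite /V.
  by case: (E0 r a); rewrite ?mul1r ?mul0r.
rewrite /= mul0r add0r /V.
by case: (E0 a b); case: (E0 b a); rewrite /= ?mul1r ?mul0r; ring.
Qed.
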